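(* Let $G$ be a nonempty countable graph not containing $K_\omega$ as a subgraph. Then the graph $K_\omega^{<{\rm rk}(G)+1>}$ admits no homomorphism into $G$.
   Context: All graphs are simple and loopless; homomorphisms are edge-preserving vertex maps. $K_n$ is the complete graph on $\{0,\dots,n-1\}$, $K_\omega$ the countably infinite complete graph. For a graph $G$ not containing $K_\omega$, $T^G$ is the set of all homomorphisms $K_n\to G$, $n\ge 1$, ordered by extension; ${\rm rk}(f)=\sup\{{\rm rk}(g)+1: g \text{ immediate successor of } f\}$ and ${\rm rk}(G)=\sup\{{\rm rk}(f)+1: f \text{ minimal in } T^G\}$. For an ordinal $\alpha$, $K_\omega^{<\alpha>}$ is the graph whose vertices are all finite strictly decreasing sequences of ordinals $<\alpha$ (including the empty sequence), two distinct sequences being adjacent iff one is an initial segment of the other. *)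

(* Defs.v *)
From Stdlib Require Import List Sorted Relations.
Import ListNotations.

Definition simple_graph (V : Type) (adj : V -> V -> Prop) : Prop :=
  (forall x y, adj x y -> adj y x) /\ (forall x, ~ adj x x).

Definition countable_type (V : Type) : Prop :=
  exists c : V -> nat, forall x y, c x = c y -> x = y.

(* G contains K_omega as a subgraph: a homomorphism K_omega -> G
   (automatically injective since G is loopless). *)
Definition contains_Komega (V : Type) (adj : V -> V -> Prop) : Prop :=
  exists h : nat -> V, forall i j, i <> j -> adj (h i) (h j).

(* Homomorphisms K_n -> G, n >= 1, encoded as the nonempty list
   [f 0; ...; f (n-1)]. Extension = list prefix; immediate successors of l
   are the lists l ++ [v]. Minimal elements are the lists [v]. *)
Definition TG (V : Type) (adj : V -> V -> Prop) (l : list V) : Prop :=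
  l <> [] /\
  forall i j x y, i <> j -> nth_error l i = Some x -> nth_error l j = Some y ->
    adj x y.

Definition well_order (W : Type) (lt : W -> W -> Prop) : Prop :=
  well_founded lt /\
  (forall a b c, lt a b -> lt b c -> lt a c) /\
  (forall a, ~ lt a a) /\
  (forall a b, lt a b \/ a = b \/ lt b a).

Definition wle {W : Type} (lt : W -> W -> Prop) (a b : W) : Prop :=
  lt a b \/ a = b.

(* w is the supremum of {x+1 : P x}, i.e. the least strict upper bound
   of {x : P x}. *)
Definition is_lsub {W : Type} (lt : W -> W -> Prop) (P : W -> Prop) (w : W)
  : Prop :=
  (forall x, P x -> lt x w) /\
  (forall u, (forall x, P x -> lt x u) -> wle lt w u).

Definition is_rank_fun (V : Type) (adj : V -> V -> Prop)
  (W : Type) (lt : W -> W -> Prop) (r : list V -> W) : Prop :=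
  forall l, TG V adj l ->
    is_lsub lt (fun x => exists v, TG V adj (l ++ [v]) /\ x = r (l ++ [v])) (r l).

Definition is_graph_rank (V : Type) (adj : V -> V -> Prop)
  (W : Type) (lt : W -> W -> Prop) (r : list V -> W) (rho : W) : Prop :=
  is_lsub lt (fun x => exists v, TG V adj [v] /\ x = r [v]) rho.

(* Vertices of K_omega^{<rho+1>}: finite strictly decreasing sequences of
   elements of W that are <= rho (i.e. < rho+1), including the empty one. *)
Definition Kvert {W : Type} (lt : W -> W -> Prop) (rho : W) (s : list W) : Prop :=
  Sorted (fun a b => lt b a) s /\ Forall (fun a => wle lt a rho) s.

Definition Kadj {W : Type} (s t : list W) : Prop :=
  s <> t /\ ((exists u, t = s ++ u) \/ (exists u, s = t ++ u)).

Definition Khom_into {W : Type} (lt : W -> W -> Prop) (rho : W)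
  (V : Type) (adj : V -> V -> Prop) (phi : list W -> V) : Prop :=
  forall s t, Kvert lt rho s -> Kvert lt rho t -> Kadj s t -> adj (phi s) (phi t).

(* Main.v *)
Require Import Defs.
From Stdlib Require Import List Sorted Relations Lia Arith.
Import ListNotations.

Lemma sorted_snoc {W : Type} (lt : W -> W -> Prop) (s : list W) (b : W) :
  Sorted (fun a c => lt c a) s -> Forall (fun a => lt b a) s ->
  Sorted (fun a c => lt c a) (s ++ [b]).
Proof.
  induction s as [|a s IH]; intros Hs Hf; simpl.
  - constructor; constructor.
  - inversion Hs; subst. inversion Hf; subst. constructor.
    + apply IH; auto.
    + destruct s as [|a' s']; simpl.
      * constructor; auto.
      * inversion H2; subst. constructor; auto.
Qed.

Lemma nth_snoc {V : Type} (l : list V) (y x : V) (i : nat) :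
  nth_error (l ++ [y]) i = Some x ->
  (nth_error l i = Some x /\ i < length l) \/ (i = length l /\ x = y).
Proof.
  intros H. destruct (Nat.lt_ge_cases i (length l)) as [Hi|Hi].
  - left. rewrite nth_error_app1 in H by exact Hi. auto.
  - right. rewrite nth_error_app2 in H by exact Hi.
    destruct (i - length l) eqn:E; simpl in H.
    + inversion H; split; [lia|auto].
    + destruct n; discriminate.
Qed.

Theorem mainTheorem6 (V : Type) (adj : V -> V -> Prop)
  (Hg : simple_graph V adj) (Hne : inhabited V) (Hc : countable_type V)
  (HK : ~ contains_Komega V adj)
  (W : Type) (lt : W -> W -> Prop) (Hwo : well_order W lt)
  (r : list V -> W) (Hr : is_rank_fun V adj W lt r)
  (rho : W) (Hrho : is_graph_rank V adj W lt r rho) :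
  ~ exists phi : list W -> V, Khom_into lt rho V adj phi.
Proof.
  intros [phi Hphi].
  destruct Hwo as [Hwf [Htr [Hirr Htri]]].
  set (Inv := fun (l : list V) (s : list W) =>
    TG V adj l /\ Kvert lt rho s /\
    forall x, In x l -> exists t u, x = phi t /\ s = t ++ u /\ Kvert lt rho t).
  assert (Claim : forall a, forall l s, Inv l s -> Forall (fun c => wle lt a c) s ->
            wle lt a rho -> wle lt a (r l)).
  { intro a. induction a as [a IH] using (well_founded_ind Hwf).
    intros l s [HTl [HKs Hel]] Hfa Harho.
    assert (Hlt : forall b, lt b a -> lt b (r l)).
    { intros b Hba.
      set (y := phi (s ++ [b])).
      assert (HKsb : Kvert lt rho (s ++ [b])).
      { destruct HKs as [HS HF]. split.
        - apply sorted_snoc; auto.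
          eapply Forall_impl; [|exact Hfa]. intros c [Hc'|<-]; eauto.
        - apply Forall_app; split; auto. constructor; auto.
          left. destruct Harho as [H|<-]; eauto. }
      assert (Hinv : Inv (l ++ [y]) (s ++ [b])).
      { split; [|split; [exact HKsb|]].
        - split.
          + intro E. destruct l; discriminate.
          + intros i j x z Hij Hx Hz.
            apply nth_snoc in Hx. apply nth_snoc in Hz.
            assert (Hadj : forall x', In x' l -> adj x' y /\ adj y x').
            { intros x' Hin. destruct (Hel x' Hin) as [t [u [-> [-> Ht]]]].
              assert (Hne' : t <> (t ++ u) ++ [b]).
              { intro E. apply (f_equal (@length W)) in E.
                rewrite !length_app in E. simpl in E. lia. }
              split; apply Hphi; auto; split; auto.
              left; exists (u ++ [b]); now rewrite app_assoc.
              right; exists (u ++ [b]); now rewrite app_assoc. }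
            destruct Hx as [[Hx _]|[-> ->]]; destruct Hz as [[Hz _]|[-> ->]].
            * destruct HTl as [_ HT]. eapply HT; eauto.
            * apply Hadj. eapply nth_error_In; eauto.
            * apply Hadj. eapply nth_error_In; eauto.
            * congruence.
        - intros x Hin. apply in_app_or in Hin. destruct Hin as [Hin|Hin].
          + destruct (Hel x Hin) as [t [u [-> [-> Ht]]]].
            exists t, (u ++ [b]). split; auto. split; auto. now rewrite app_assoc.
          + destruct Hin as [<-|[]]. exists (s ++ [b]), []. rewrite app_nil_r. auto. }
      assert (Hb : wle lt b (r (l ++ [y]))).
      { apply (IH b Hba (l ++ [y]) (s ++ [b]) Hinv).
        - apply Forall_app; split.
          + eapply Forall_impl; [|exact Hfa]. intros c [Hc'|<-]; left; eauto.
          + constructor; [right; reflexivity|constructor].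
        - left. destruct Harho as [H|<-]; eauto. }
      assert (Hstep : lt (r (l ++ [y])) (r l)).
      { destruct (Hr l HTl) as [H _]. apply H. exists y. split; auto.
        destruct Hinv as [Ht _]; exact Ht. }
      destruct Hb as [H|E]; [eauto|rewrite E; exact Hstep]. }
    destruct (Htri a (r l)) as [H|[H|H]].
    - left; auto.
    - right; auto.
    - exfalso. apply (Hirr (r l)). apply Hlt; auto. }
  assert (HT0 : TG V adj [phi []]).
  { split; [discriminate|]. intros i j x y Hij Hx Hy.
    destruct i as [|[|]]; destruct j as [|[|]]; simpl in *; try discriminate; lia. }
  assert (Hin0 : Inv [phi []] []).
  { split; [exact HT0|split].
    - split; constructor.
    - intros x [<-|[]]. exists [], []. split; auto. split; auto. split; constructor. }
  specialize (Claim rho _ _ Hin0 (Forall_nil _) (or_intror eq_refl)).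
  destruct Hrho as [H _].
  assert (Hl : lt (r [phi []]) rho) by (apply H; exists (phi []); auto).
  destruct Claim as [C|C].
  - apply (Hirr rho); eauto.
  - rewrite <- C in Hl. apply (Hirr rho); auto.
Qed.
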